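(* Let $s>0$, $\nu>0$, $\Lambda>1$, $\varepsilon_c>0$ and $\varepsilon\in\mathbb{R}$ be real constants, and put $\lambda=1+1/s$. For $\Lambda'>0$ let $g_{\Lambda'}(\xi)=\xi^{3}+(1+s)\nu\xi^{2}-\Lambda'\xi-s\nu\Lambda'$, and let $\xi_{\Lambda}$ and $\xi_1$ denote the unique positive real roots of $g_{\Lambda}$ and $g_{1}$ respectively. Suppose $f:\mathbb{R}\to\mathbb{R}$ is three times differentiable on $(-\infty,0)$ and on $[0,\infty)$ with one-sided limits of $f,f',f''$ at $0$ from each side, and satisfies $$0=f(\chi)-(1+s)\nu f'(\chi)-\Lambda f''(\chi)+s\nu\Lambda f'''(\chi)\quad(\chi<0),$$ $$0=f(\chi)-\varepsilon-(1+s)\nu f'(\chi)-f''(\chi)+s\nu f'''(\chi)\quad(\chi\ge 0),$$ together with the conditions $$f(-0)-s\nu f'(-0)=f(+0)-s\nu f'(+0)=\frac{\Lambda\varepsilon-\varepsilon_c}{\Lambda-1},\quad f'(-0)=f'(+0),\quad f''(-0)=f''(+0),\quad \lim_{\chi\to-\infty}f(\chi)=0,\quad \lim_{\chi\to+\infty}f(\chi)=\varepsilon,$$ where $h(\pm0)$ denotes the one-sided limit of $h$ at $0$. Then $$\tilde{\varepsilon}\equiv\frac{\varepsilon}{\varepsilon_c}=\frac{\nu\left(1+s+\frac{s\Lambda}{\xi_1\xi_\Lambda}\right)+\xi_1+\xi_\Lambda}{\nu\left(1+s\Lambda+\frac{s\Lambda}{\xi_1\xi_\Lambda}\right)+\L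ambda\xi_1+\xi_\Lambda}=\frac{\frac{\nu}{\lambda-1}\left(\frac{\Lambda}{\xi_1\xi_\Lambda}+\lambda\right)+\xi_1+\xi_\Lambda}{\frac{\nu}{\lambda-1}\left(\Lambda+\frac{\Lambda}{\xi_1\xi_\Lambda}+\lambda-1\right)+\Lambda\xi_1+\xi_\Lambda}.$$
   Context: This is the steady-state (constant crack velocity) problem for a minimal viscoelastic crack model built from Zener elements: $f$ is the dashpot strain profile in the co-moving coordinate $\chi$ (crack tip at $\chi=0$), $\nu>0$ is the dimensionless crack velocity, $s=E_0/E_1$ is a ratio of spring moduli, $\Lambda=L/l$ is the ratio of sheet height to lattice spacing, $\varepsilon$ is the applied global strain and $\varepsilon_c$ the critical breaking strain. For $s,\nu,\Lambda'>0$ the cubic $g_{\Lambda'}$ has exactly one positive real root (and two negative ones). The paper also records the positive root $\xi_\Lambda$ explicitly via Cardano's formula. *)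

(* Defs.v *)
From Stdlib Require Import Reals.
From Coquelicot Require Import Coquelicot.
Open Scope R_scope.

Definition gcub (s nu L' xi : R) : R :=
  xi ^ 3 + (1 + s) * nu * xi ^ 2 - L' * xi - s * nu * L'.

Definition is_right_derive (g : R -> R) (x l : R) : Prop :=
  filterlim (fun h => (g (x + h) - g x) / h) (at_right 0) (locally l).

(* Main.v *)
Require Import Defs.
From Stdlib Require Import Reals Lra.
From Coquelicot Require Import Coquelicot.
Open Scope R_scope.


Lemma exp_lim_neg k : k < 0 -> is_lim (fun x => exp (k*x)) p_infty 0.
Proof.
  intros Hk.
  apply (is_lim_comp exp (fun x => k*x) p_infty 0 m_infty).
  - exact is_lim_exp_m.
  - eapply is_lim_ext. { intros y. reflexivity. }
    replace m_infty with (Rbar_mult k p_infty).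
    + apply is_lim_scal_l. apply is_lim_id.
    + simpl. unfold Rbar_mult, Rbar_mult'. idtac. destruct (Rle_dec 0 k) as [Hk0|Hk0]; [exfalso; lra | reflexivity].
  - exists 0. intros; discriminate.
Qed.

Lemma decay (a b c C0 C1 C2 : R) (u : R -> R) :
  a < c -> b < c -> 0 < c -> is_lim u p_infty 0 ->
  (forall x, 0 < x -> u x = C0 * exp (c*x) + C1 * exp (a*x) + C2 * exp (b*x)) ->
  C0 = 0.
Proof.
  intros Hac Hbc Hc Hu Hform.
  assert (H1 : is_lim (fun x => u x * exp ((-c)*x)) p_infty 0).
  { replace (Finite 0) with (Rbar_mult 0 0) by (simpl; f_equal; ring).
    apply is_lim_mult; [exact Hu| apply exp_lim_neg; lra | simpl; auto]. }
  assert (H2 : is_lim (fun x => C0 + C1 * exp ((a-c)*x) + C2 * exp ((b-c)*x)) p_infty C0).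
  {
    assert (A1 := is_lim_const C0 p_infty).
    assert (A2 := is_lim_scal_l _ C1 _ _ (exp_lim_neg (a-c) ltac:(lra))).
    assert (A3 := is_lim_scal_l _ C2 _ _ (exp_lim_neg (b-c) ltac:(lra))).
    assert (A4 := is_lim_plus _ _ _ _ _ (C0 + C1*0) A1 A2 ltac:(unfold is_Rbar_plus; simpl; reflexivity)).
    replace (Finite C0) with (Finite (C0 + C1*0 + C2*0)) by (f_equal; ring).
    exact (is_lim_plus _ _ _ _ _ _ A4 A3 ltac:(unfold is_Rbar_plus; simpl; reflexivity)). }
  assert (H3 : is_lim (fun x => C0 + C1 * exp ((a-c)*x) + C2 * exp ((b-c)*x)) p_infty 0).
  { eapply is_lim_ext_loc; [|exact H1].
    exists 0. intros x Hx. rewrite Hform by lra.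
    replace ((a-c)*x) with (a*x + (-c)*x) by ring.
    replace ((b-c)*x) with (b*x + (-c)*x) by ring.
    rewrite !exp_plus.
    assert (exp (c*x) * exp ((-c)*x) = 1).
    { rewrite <- exp_plus. replace (c*x + -c*x) with 0 by ring. apply exp_0. }
    cbv beta. transitivity (C0 * (exp (c * x) * exp (- c * x)) + C1 * (exp (a * x) * exp (- c * x)) + C2 * (exp (b * x) * exp (- c * x))); [ring | rewrite H; ring]. }
  apply is_lim_unique in H2. apply is_lim_unique in H3.
  rewrite H2 in H3. injection H3. auto.
Qed.

Lemma lim_plus (f g : R -> R) (x y : R) :
  filterlim f (at_right 0) (locally x) -> filterlim g (at_right 0) (locally y) ->
  filterlim (fun t => f t + g t) (at_right 0) (locally (x + y)).
Proof. intros Hf Hg. exact (filterlim_comp_2 f g Rplus Hf Hg (filterlim_plus x y)). Qed.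

Lemma lim_mult (f g : R -> R) (x y : R) :
  filterlim f (at_right 0) (locally x) -> filterlim g (at_right 0) (locally y) ->
  filterlim (fun t => f t * g t) (at_right 0) (locally (x * y)).
Proof. intros Hf Hg. exact (filterlim_comp_2 f g Rmult Hf Hg (filterlim_mult x y)). Qed.

Lemma lim_scal (k : R) (f : R -> R) (x : R) :
  filterlim f (at_right 0) (locally x) -> filterlim (fun t => k * f t) (at_right 0) (locally (k * x)).
Proof. intros Hf. exact (lim_mult (fun _ => k) f k x (filterlim_const k) Hf). Qed.

Lemma lim_opp (f : R -> R) (x : R) :
  filterlim f (at_right 0) (locally x) -> filterlim (fun t => - f t) (at_right 0) (locally (- x)).
Proof.
  intros Hf. replace (-x) with (-1 * x) by ring.
  eapply filterlim_ext; [|apply (lim_scal (-1) f x Hf)]. intros; simpl; ring.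
Qed.

Lemma Kconst (a b c : R) (u u1 u2 u3 : R -> R) (U0 U1 U2 : R) :
  (forall x, 0 < x -> is_derive u x (u1 x) /\ is_derive u1 x (u2 x) /\ is_derive u2 x (u3 x)) ->
  (forall x, 0 < x -> u3 x - (a+b+c)*u2 x + (a*b+b*c+c*a)*u1 x - a*b*c*u x = 0) ->
  filterlim u (at_right 0) (locally U0) ->
  filterlim u1 (at_right 0) (locally U1) ->
  filterlim u2 (at_right 0) (locally U2) ->
  forall x, 0 < x -> exp (-c*x) * (u2 x - (a+b)*u1 x + a*b*u x) = U2 - (a+b)*U1 + a*b*U0.
Proof.
  intros Hd Hode L0 L1 L2.
  set (Z := fun t => u2 t - (a+b)*u1 t + a*b*u t).
  assert (HD : forall x, 0 < x -> is_derive (fun t => exp(-c*t) * Z t) x 0).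
  { intros x Hx. destruct (Hd x Hx) as [D0 [D1 D2]]. unfold Z.
    auto_derive.
    - repeat split; eexists; eassumption.
    - replace (Derive (fun x0 => u x0) x) with (u1 x) by (symmetry; apply is_derive_unique; exact D0).
      replace (Derive (fun x0 => u1 x0) x) with (u2 x) by (symmetry; apply is_derive_unique; exact D1).
      replace (Derive (fun x0 => u2 x0) x) with (u3 x) by (symmetry; apply is_derive_unique; exact D2).
      transitivity (exp (-c*x) * (u3 x - (a+b+c)*u2 x + (a*b+b*c+c*a)*u1 x - a*b*c*u x)); [ring|].
      rewrite (Hode x Hx); ring. }
  assert (Hcst : forall x y, 0 < x -> x < y -> exp(-c*x) * Z x = exp(-c*y) * Z y).
  { intros x y Hx Hxy.
    destruct (MVT_cor2 (fun t => exp(-c*t) * Z t) (fun _ => 0) x y Hxy) as [t [Ht _]].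
    { intros t Ht. apply is_derive_Reals. apply HD. lra. }
    lra. }
  set (K := exp(-c*1) * Z 1).
  assert (HZ : forall x, 0 < x -> exp(-c*x) * Z x = K).
  { intros x Hx. unfold K. destruct (Rtotal_order x 1) as [H|[H|H]].
    - apply Hcst; lra.
    - subst; reflexivity.
    - symmetry; apply Hcst; lra. }
  assert (HZ' : forall x, 0 < x -> Z x = K * exp (c*x)).
  { intros x Hx. rewrite <- (HZ x Hx).
    transitivity (Z x * (exp (c*x) * exp (-c*x))); [|ring].
    rewrite <- exp_plus. replace (c*x + -c*x) with 0 by ring. rewrite exp_0; ring. }
  assert (LZ : filterlim Z (at_right 0) (locally (U2 - (a+b)*U1 + a*b*U0))).
  { unfold Z. apply lim_plus; [apply lim_plus|]; auto.
    - apply lim_opp, lim_scal; auto.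
    - apply lim_scal; auto. }
  assert (LE : filterlim (fun x => K * exp (c*x)) (at_right 0) (locally (K * 1))).
  { apply lim_scal.
    assert (Hc : continuous (fun x => exp (c*x)) 0).
    { exact (ex_derive_continuous (fun x => exp (c*x)) 0 ltac:(auto_derive; auto)). }
    replace 1 with (exp (c*0)) by (rewrite Rmult_0_r; apply exp_0).
    assert (H : filterlim (fun x => exp(c*x)) (locally 0) (locally (exp (c*0)))) by exact Hc.
    intros P HP. generalize (H P HP). intros [d Hd0]. exists d. intros y Hy _. apply Hd0. exact Hy. }
  assert (LE' : filterlim (fun x => K * exp (c*x)) (at_right 0) (locally (U2 - (a+b)*U1 + a*b*U0))).
  { apply (filterlim_ext_loc Z); [|exact LZ].
    exists (mkposreal 1 Rlt_0_1). intros y _ Hy. apply HZ'. exact Hy. }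
  assert (Heq := filterlim_locally_unique _ _ _ LE LE').
  intros x Hx. fold (Z x). rewrite (HZ x Hx). rewrite <- Heq. ring.
Qed.

Lemma ode3 (a b c : R) (u u1 u2 u3 : R -> R) (U0 U1 U2 : R) :
  a < b -> b < c -> 0 < c ->
  (forall x, 0 < x -> is_derive u x (u1 x) /\ is_derive u1 x (u2 x) /\ is_derive u2 x (u3 x)) ->
  (forall x, 0 < x -> u3 x - (a+b+c)*u2 x + (a*b+b*c+c*a)*u1 x - a*b*c*u x = 0) ->
  filterlim u (at_right 0) (locally U0) ->
  filterlim u1 (at_right 0) (locally U1) ->
  filterlim u2 (at_right 0) (locally U2) ->
  is_lim u p_infty 0 ->
  U2 - (a+b)*U1 + a*b*U0 = 0 /\ (0 < b -> U2 - (a+c)*U1 + a*c*U0 = 0).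
Proof.
  intros Hab Hbc Hc Hd Hode L0 L1 L2 Hinf.
  set (Kc := U2 - (a+b)*U1 + a*b*U0).
  set (Kb := U2 - (a+c)*U1 + a*c*U0).
  set (Ka := U2 - (b+c)*U1 + b*c*U0).
  assert (Ec := Kconst a b c u u1 u2 u3 U0 U1 U2 Hd Hode L0 L1 L2).
  assert (Eb := Kconst a c b u u1 u2 u3 U0 U1 U2 Hd
     ltac:(intros x Hx; rewrite <- (Hode x Hx); ring) L0 L1 L2).
  assert (Ea := Kconst b c a u u1 u2 u3 U0 U1 U2 Hd
     ltac:(intros x Hx; rewrite <- (Hode x Hx); ring) L0 L1 L2).
  assert (Hinv : forall r x, exp (-r*x) * exp (r*x) = 1).
  { intros r x. rewrite <- exp_plus. replace (-r*x + r*x) with 0 by ring. apply exp_0. }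
  assert (Hform : forall x, 0 < x ->
    u x = Kc/((c-a)*(c-b)) * exp (c*x) + Ka/((a-b)*(a-c)) * exp (a*x) + Kb/((b-a)*(b-c)) * exp (b*x)).
  { intros x Hx.
    specialize (Ec x Hx). specialize (Eb x Hx). specialize (Ea x Hx).
    fold Kc in Ec. fold Kb in Eb. fold Ka in Ea.
    rewrite <- Ec, <- Eb, <- Ea.
    assert (Hc' := Hinv c x). assert (Hb' := Hinv b x). assert (Ha' := Hinv a x).
    assert (c - a <> 0) by lra. assert (c - b <> 0) by lra. assert (b - a <> 0) by lra.
    assert (a - b <> 0) by lra. assert (a - c <> 0) by lra. assert (b - c <> 0) by lra.
    transitivity ((u2 x - (a + b) * u1 x + a * b * u x) * (exp (- c * x) * exp (c*x)) / ((c - a) * (c - b))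
      + (u2 x - (b + c) * u1 x + b * c * u x) * (exp (- a * x) * exp (a*x)) / ((a - b) * (a - c))
      + (u2 x - (a + c) * u1 x + a * c * u x) * (exp (- b * x) * exp (b*x)) / ((b - a) * (b - c))).
    - rewrite Hc', Hb', Ha'. field; repeat split; auto.
    - field; repeat split; auto. }
  assert (HKc : Kc = 0).
  { assert (H0 := decay a b c _ _ _ u ltac:(lra) ltac:(lra) Hc Hinf Hform).
    assert ((c-a)*(c-b) <> 0) by (apply Rmult_integral_contrapositive; split; lra).
    unfold Rdiv in H0. apply Rmult_integral in H0. destruct H0 as [H0|H0]; auto.
    exfalso. apply (Rinv_neq_0_compat _ H). exact H0. }
  split; [exact HKc|].
  intros Hb.
  assert (Hform2 : forall x, 0 < x ->
    u x = Kb/((b-a)*(b-c)) * exp (b*x) + Ka/((a-b)*(a-c)) * exp (a*x) + 0 * exp (a*x)).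
  { intros x Hx. rewrite (Hform x Hx). rewrite HKc. unfold Rdiv. ring. }
  assert (H0 := decay a a b _ _ _ u ltac:(lra) ltac:(lra) Hb Hinf Hform2).
  assert ((b-a)*(b-c) <> 0) by (apply Rmult_integral_contrapositive; split; lra).
  unfold Rdiv in H0. apply Rmult_integral in H0. destruct H0 as [H0|H0]; auto.
  exfalso. apply (Rinv_neq_0_compat _ H). exact H0.
Qed.

Lemma quad_roots (B C t : R) : t*t + B*t + C < 0 ->
  exists b c, b < t /\ t < c /\ b + c = -B /\ b*c = C.
Proof.
  intros Ht.
  set (D := B*B - 4*C).
  assert (E : (2*t+B)*(2*t+B) = D + 4*(t*t+B*t+C)) by (unfold D; ring).
  assert (HD : (2*t+B)*(2*t+B) < D) by lra.
  assert (HD0 : 0 <= D) by (pose proof (Rle_0_sqr (2*t+B)) as Hq; unfold Rsqr in Hq; lra).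
  set (s := sqrt D).
  assert (Hs : s * s = D) by (apply sqrt_sqrt; exact HD0).
  assert (Hs0 : 0 <= s) by apply sqrt_pos.
  exists ((-B - s)/2), ((-B + s)/2).
  assert (Hlt : Rabs (2*t+B) < s).
  { rewrite <- (Rabs_pos_eq s Hs0). apply Rsqr_lt_abs_0. unfold Rsqr. lra. }
  destruct (Rabs_def2 _ _ Hlt).
  repeat split; try lra.
Qed.

Lemma refl_d1 (g g' : R -> R) :
  (forall x, x < 0 -> is_derive g x (g' x)) ->
  forall x, 0 < x -> is_derive (fun y => g (-y)) x (- g' (-x)).
Proof.
  intros H x Hx. assert (D := H (-x) ltac:(lra)).
  auto_derive.
  - eexists; exact D.
  - replace (Derive (fun x0 => g x0) (-x)) with (g' (-x)) by (symmetry; apply is_derive_unique; exact D). ring.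
Qed.
Lemma refl_d2 (g g' : R -> R) :
  (forall x, x < 0 -> is_derive g x (g' x)) ->
  forall x, 0 < x -> is_derive (fun y => - g (-y)) x (g' (-x)).
Proof.
  intros H x Hx. assert (D := H (-x) ltac:(lra)).
  auto_derive.
  - eexists; exact D.
  - replace (Derive (fun x0 => g x0) (-x)) with (g' (-x)) by (symmetry; apply is_derive_unique; exact D). ring.
Qed.
Lemma shift_d (g g' : R -> R) (e : R) :
  (forall x, 0 < x -> is_derive g x (g' x)) ->
  forall x, 0 < x -> is_derive (fun y => g y - e) x (g' x).
Proof.
  intros H x Hx. assert (D := H x Hx).
  auto_derive.
  - eexists; exact D.
  - replace (Derive (fun x0 => g x0) x) with (g' x) by (symmetry; apply is_derive_unique; exact D). ring.
Qed.
Lemma lim_refl (g : R -> R) (l : R) :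
  filterlim g (at_left 0) (locally l) -> filterlim (fun y => g (-y)) (at_right 0) (locally l).
Proof.
  intros H. eapply filterlim_comp; [apply filterlim_Ropp_right|]. rewrite Ropp_0. exact H.
Qed.
Lemma lim_inf_refl (g : R -> R) :
  is_lim g m_infty 0 -> is_lim (fun y => g (-y)) p_infty 0.
Proof.
  intros H. apply (is_lim_comp g (fun y => -y) p_infty 0 m_infty H).
  - replace m_infty with (Rbar_opp p_infty) by reflexivity. apply is_lim_opp, is_lim_id.
  - exists 0. intros; discriminate.
Qed.
Lemma lim_inf_shift (g : R -> R) (e : R) :
  is_lim g p_infty e -> is_lim (fun y => g y - e) p_infty 0.
Proof.
  intros H. apply (is_lim_minus g (fun _ => e) p_infty e e 0 H (is_lim_const e p_infty)).
  unfold is_Rbar_minus, is_Rbar_plus. simpl. f_equal. f_equal. ring.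
Qed.

Theorem theorem1
  (s nu Lam epsc eps : R)
  (hs : 0 < s) (hnu : 0 < nu) (hLam : 1 < Lam) (hepsc : 0 < epsc)
  (xiL xi1 : R)
  (hxiL : 0 < xiL) (hgL : gcub s nu Lam xiL = 0)
  (hxi1 : 0 < xi1) (hg1 : gcub s nu 1 xi1 = 0)
  (f f1 f2 f3 : R -> R)
  (* f is three times differentiable on (-oo,0), with derivatives f1, f2, f3 *)
  (dneg : forall x, x < 0 ->
     is_derive f x (f1 x) /\ is_derive f1 x (f2 x) /\ is_derive f2 x (f3 x))
  (* f is three times differentiable on [0,oo) (one-sided at 0) *)
  (dpos : forall x, 0 < x ->
     is_derive f x (f1 x) /\ is_derive f1 x (f2 x) /\ is_derive f2 x (f3 x))
  (dzero : is_right_derive f 0 (f1 0) /\ is_right_derive f1 0 (f2 0)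
           /\ is_right_derive f2 0 (f3 0))
  (* one-sided limits of f, f', f'' at 0 *)
  (fm0 fp0 f1m0 f1p0 f2m0 f2p0 : R)
  (lfm : filterlim f (at_left 0) (locally fm0))
  (lfp : filterlim f (at_right 0) (locally fp0))
  (lf1m : filterlim f1 (at_left 0) (locally f1m0))
  (lf1p : filterlim f1 (at_right 0) (locally f1p0))
  (lf2m : filterlim f2 (at_left 0) (locally f2m0))
  (lf2p : filterlim f2 (at_right 0) (locally f2p0))
  (* the ODEs *)
  (odeneg : forall x, x < 0 ->
     0 = f x - (1 + s) * nu * f1 x - Lam * f2 x + s * nu * Lam * f3 x)
  (odepos : forall x, 0 <= x ->
     0 = f x - eps - (1 + s) * nu * f1 x - f2 x + s * nu * f3 x)
  (* matching and boundary conditions *)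
  (bc1 : fm0 - s * nu * f1m0 = (Lam * eps - epsc) / (Lam - 1))
  (bc2 : fp0 - s * nu * f1p0 = (Lam * eps - epsc) / (Lam - 1))
  (bc3 : f1m0 = f1p0)
  (bc4 : f2m0 = f2p0)
  (linf_m : is_lim f m_infty 0)
  (linf_p : is_lim f p_infty eps) :
  let lam := 1 + 1 / s in
  eps / epsc =
    (nu * (1 + s + s * Lam / (xi1 * xiL)) + xi1 + xiL)
    / (nu * (1 + s * Lam + s * Lam / (xi1 * xiL)) + Lam * xi1 + xiL)
  /\
  (nu * (1 + s + s * Lam / (xi1 * xiL)) + xi1 + xiL)
    / (nu * (1 + s * Lam + s * Lam / (xi1 * xiL)) + Lam * xi1 + xiL)
  =
    (nu / (lam - 1) * (Lam / (xi1 * xiL) + lam) + xi1 + xiL)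
    / (nu / (lam - 1) * (Lam + Lam / (xi1 * xiL) + lam - 1) + Lam * xi1 + xiL).
Proof.
  intros lam.
  assert (hk : 0 < s * nu) by nra.
  set (k := s * nu) in *.
  assert (hk0 : k <> 0) by lra.
  assert (hx10 : xi1 <> 0) by lra.
  assert (hxL0 : xiL <> 0) by lra.
  assert (hL0 : Lam <> 0) by lra.
  set (a := -1/xi1).
  set (e2 := -1/k). set (e1 := -(1+s)*nu/k). set (e0 := 1/k).
  assert (pa : a*a*a + e2*a*a + e1*a + e0 = 0).
  { replace (a*a*a + e2*a*a + e1*a + e0) with (gcub s nu 1 xi1 / (k*xi1^3)).
    - rewrite hg1. unfold Rdiv. ring.
    - unfold gcub, a, e2, e1, e0, k. field. repeat split; lra. }
  set (B := a + e2). set (C := e1 + a*B).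
  assert (aneg : a < 0).
  { unfold a. assert (0 < 1/xi1) by (apply Rdiv_lt_0_compat; lra). lra. }
  assert (Hq : (1/k)*(1/k) + B*(1/k) + C < 0).
  { assert (E : (1/k - a) * ((1/k)*(1/k) + B*(1/k) + C) = - (nu/(k*k))).
    { transitivity ((1/k)*(1/k)*(1/k) + e2*(1/k)*(1/k) + e1*(1/k) + e0
                    - (a*a*a + e2*a*a + e1*a + e0)).
      - unfold C, B. ring.
      - rewrite pa. unfold e2, e1, e0, k. field. repeat split; lra. }
    assert (0 < nu/(k*k)) by (apply Rdiv_lt_0_compat; nra).
    assert (0 < 1/k) by (apply Rdiv_lt_0_compat; lra).
    destruct (Rlt_or_le ((1/k)*(1/k) + B*(1/k) + C) 0) as [Hh|Hh]; auto.
    exfalso. nra. }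
  destruct (quad_roots B C (1/k) Hq) as [b [c [Hb1 [Hc1 [Hbcs Hbcp]]]]].
  assert (aC : a * C = - e0).
  { unfold C, B. transitivity (a*a*a + e2*a*a + e1*a + e0 - e0); [ring | rewrite pa; ring]. }
  assert (he0 : 0 < e0) by (unfold e0; apply Rdiv_lt_0_compat; lra).
  assert (Cpos : 0 < C) by nra.
  assert (cpos : 0 < c) by (assert (0 < 1/k) by (apply Rdiv_lt_0_compat; lra); lra).
  assert (bpos : 0 < b) by nra.
  assert (S1 : a + b + c = 1/k).
  { replace (a+b+c) with (a + (b+c)) by ring. rewrite Hbcs. unfold B, e2. field. auto. }
  assert (S2 : a*b + b*c + c*a = e1).
  { replace (a*b+b*c+c*a) with (a*(b+c) + b*c) by ring. rewrite Hbcs, Hbcp. unfold C. ring. }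
  assert (S3 : a*b*c = - e0).
  { replace (a*b*c) with (a*(b*c)) by ring. rewrite Hbcp. exact aC. }
  assert (POS := ode3 a b c (fun x => f x - eps) f1 f2 f3 (fp0 - eps) f1p0 f2p0
     ltac:(lra) ltac:(lra) cpos).
  destruct POS as [Kc Kb'].
  { intros x Hx. destruct (dpos x Hx) as [D0 [D1 D2]]. split; [|split; assumption].
    apply (shift_d f f1 eps (fun y Hy => proj1 (dpos y Hy)) x Hx). }
  { intros x Hx. rewrite S1, S2, S3. unfold e1, e0.
    transitivity ((1/k) * (f x - eps - (1+s)*nu*f1 x - f2 x + k*f3 x)).
    - field. auto.
    - rewrite <- (odepos x (Rlt_le _ _ Hx)). ring. }
  { exact (lim_plus f (fun _ => -eps) fp0 (-eps) lfp (filterlim_const (-eps))). }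
  { exact lf1p. }
  { exact lf2p. }
  { exact (lim_inf_shift f eps linf_p). }
  assert (Kb := Kb' bpos). clear Kb'.
  assert (P1 : f1p0 = a * (fp0 - eps)).
  { assert (H : (c - b) * (a*(fp0-eps) - f1p0) = 0) by lra.
    apply Rmult_integral in H. destruct H as [Hh|Hh]; lra. }
  assert (P2 : f2p0 = a * a * (fp0 - eps)).
  { rewrite P1 in Kc. lra. }
  set (c0 := 1/xiL).
  set (e2' := 1/k). set (e1' := -(1+s)*nu/(k*Lam)). set (e0' := -1/(k*Lam)).
  assert (pc0 : c0*c0*c0 + e2'*c0*c0 + e1'*c0 + e0' = 0).
  { replace (c0*c0*c0 + e2'*c0*c0 + e1'*c0 + e0') with (- gcub s nu Lam xiL / (k*Lam*xiL^3)).
    - rewrite hgL. unfold Rdiv. ring.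
    - unfold gcub, c0, e2', e1', e0', k. field. repeat split; lra. }
  set (B' := c0 + e2'). set (C' := e1' + c0*B').
  assert (c0pos : 0 < c0) by (unfold c0; apply Rdiv_lt_0_compat; lra).
  assert (Hq' : (-1/k)*(-1/k) + B'*(-1/k) + C' < 0).
  { assert (E : (-1/k - c0) * ((-1/k)*(-1/k) + B'*(-1/k) + C') = nu/(k*k*Lam)).
    { transitivity ((-1/k)*(-1/k)*(-1/k) + e2'*(-1/k)*(-1/k) + e1'*(-1/k) + e0'
                    - (c0*c0*c0 + e2'*c0*c0 + e1'*c0 + e0')).
      - unfold C', B'. ring.
      - rewrite pc0. unfold e2', e1', e0', k. field. repeat split; lra. }
    assert (0 < nu/(k*k*Lam)) by (apply Rdiv_lt_0_compat; nra).
    assert (0 < 1/k) by (apply Rdiv_lt_0_compat; lra).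
    assert (-1/k = - (1/k)) by (field; auto).
    destruct (Rlt_or_le ((-1/k)*(-1/k) + B'*(-1/k) + C') 0) as [Hh|Hh]; auto.
    exfalso. nra. }
  destruct (quad_roots B' C' (-1/k) Hq') as [b1 [b2 [Hb11 [Hb21 [Hbs' Hbp']]]]].
  assert (cC : c0 * C' = - e0').
  { unfold C', B'. transitivity (c0*c0*c0 + e2'*c0*c0 + e1'*c0 + e0' - e0'); [ring | rewrite pc0; ring]. }
  assert (he0' : 0 < - e0').
  { unfold e0'. assert (0 < 1/(k*Lam)) by (apply Rdiv_lt_0_compat; nra).
    replace (- (-1/(k*Lam))) with (1/(k*Lam)) by (field; split; auto). lra. }
  assert (Cpos' : 0 < C') by nra.
  assert (b1neg : b1 < 0) by (assert (0 < 1/k) by (apply Rdiv_lt_0_compat; lra);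
                              assert (-1/k = - (1/k)) by (field; auto); lra).
  assert (b2neg : b2 < 0) by nra.
  assert (S1' : b1 + b2 + c0 = - e2').
  { rewrite Hbs'. unfold B'. ring. }
  assert (S2' : b1*b2 + b2*c0 + c0*b1 = e1').
  { replace (b1*b2 + b2*c0 + c0*b1) with (c0*(b1+b2) + b1*b2) by ring. rewrite Hbs', Hbp'. unfold C'. ring. }
  assert (S3' : b1*b2*c0 = - e0').
  { rewrite Hbp'. rewrite Rmult_comm. exact cC. }
  assert (NEG := ode3 b1 b2 c0 (fun y => f (-y)) (fun y => - f1 (-y)) (fun y => f2 (-y))
     (fun y => - f3 (-y)) fm0 (- f1m0) f2m0 ltac:(lra) ltac:(lra) c0pos).
  destruct NEG as [KL _].
  { intros x Hx. split; [|split].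
    - exact (refl_d1 f f1 (fun y Hy => proj1 (dneg y Hy)) x Hx).
    - exact (refl_d2 f1 f2 (fun y Hy => proj1 (proj2 (dneg y Hy))) x Hx).
    - exact (refl_d1 f2 f3 (fun y Hy => proj2 (proj2 (dneg y Hy))) x Hx). }
  { intros x Hx. rewrite S1', S2', S3'. unfold e2', e1', e0'.
    transitivity ((-1/(k*Lam)) * (f (-x) - (1+s)*nu*f1 (-x) - Lam*f2 (-x) + k*Lam*f3 (-x))).
    - field. split; auto.
    - rewrite <- (odeneg (-x) ltac:(lra)). ring. }
  { exact (lim_refl f fm0 lfm). }
  { exact (lim_opp _ _ (lim_refl f1 f1m0 lf1m)). }
  { exact (lim_refl f2 f2m0 lf2m). }
  { exact (lim_inf_refl f linf_m). }
  rewrite Hbs', Hbp' in KL.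
  assert (HC' : C' = xiL/(k*Lam)).
  { apply (Rmult_eq_reg_l c0); [|lra]. rewrite cC. unfold c0, e0'. field. repeat split; auto. }
  assert (HB' : B' = 1/xiL + 1/k) by (unfold B', c0, e2'; ring).
  set (A := (Lam * eps - epsc) / (Lam - 1)) in *.
  assert (hA : A * (Lam - 1) = Lam * eps - epsc) by (unfold A; field; lra).
  set (d := fp0 - eps) in *.
  assert (E1 : d*(xi1+k) = (A - eps)*xi1).
  { rewrite <- bc2. rewrite P1. unfold d, a. field. auto. }
  set (M := k*Lam*xiL + k*Lam*xi1 + Lam*xi1*xiL - k*xi1*xiL^2).
  assert (E2 : d*M + xi1^2*xiL^2*A = 0).
  { transitivity (k*Lam*xi1^2*xiL * (f2m0 - - B' * - f1m0 + C' * fm0)).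
    - replace fm0 with (A + k*f1m0) by lra.
      rewrite bc4, bc3, P2, P1, HC', HB'. unfold M, a. field. repeat split; auto.
    - rewrite KL. ring. }
  set (N := M + xi1*xiL^2*(xi1+k)).
  assert (E3 : eps*M = A*N).
  { assert (H : xi1 * (eps*M - A*N) = 0).
    { transitivity (-(xi1+k)*(d*M + xi1^2*xiL^2*A) + M*(d*(xi1+k) - (A-eps)*xi1)).
      - unfold N. ring.
      - rewrite E2, E1. ring. }
    apply Rmult_integral in H. destruct H as [H|H]; [lra|]. lra. }
  assert (E4 : eps*(Lam*N - (Lam-1)*M) = epsc*N).
  { transitivity (Lam*(eps*N) - (Lam-1)*(eps*M)); [ring|].
    rewrite E3. transitivity (N * (Lam*eps - A*(Lam-1))); [ring|].
    rewrite hA. ring. }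
  set (Tn' := nu*(xi1*xiL*(1+s) + s*Lam) + xi1^2*xiL + xi1*xiL^2).
  set (Td' := nu*(xi1*xiL*(1+s*Lam) + s*Lam) + Lam*xi1^2*xiL + xi1*xiL^2).
  assert (HN : N = xiL*Tn').
  { transitivity (xiL*Tn' - xi1*gcub s nu Lam xiL).
    - unfold N, M, Tn', gcub, k. ring.
    - rewrite hgL. ring. }
  assert (HD : Lam*N - (Lam-1)*M = xiL*Td').
  { transitivity (xiL*Td' - xi1*gcub s nu Lam xiL).
    - unfold N, M, Td', gcub, k. ring.
    - rewrite hgL. ring. }
  rewrite HD, HN in E4.
  assert (E5 : eps*Td' = epsc*Tn').
  { apply (Rmult_eq_reg_l xiL); [|lra]. transitivity (eps * (xiL * Td')); [ring|]. rewrite E4. ring. }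
  assert (hxx : 0 < xi1*xiL) by nra.
  assert (hsL : 0 < s*Lam) by nra.
  assert (Tdpos : 0 < Td').
  { unfold Td'.
    assert (0 < xi1*xiL*(1+s*Lam)) by (apply Rmult_lt_0_compat; lra).
    assert (0 < nu*(xi1*xiL*(1+s*Lam) + s*Lam)) by (apply Rmult_lt_0_compat; lra).
    assert (0 < xi1^2) by (apply pow_lt; lra).
    assert (0 < xiL^2) by (apply pow_lt; lra).
    assert (0 < Lam*xi1^2) by (apply Rmult_lt_0_compat; lra).
    assert (0 < Lam*xi1^2*xiL) by (apply Rmult_lt_0_compat; lra).
    assert (0 < xi1*xiL^2) by (apply Rmult_lt_0_compat; lra). lra. }
  assert (hq : 0 < s*Lam/(xi1*xiL)) by (apply Rdiv_lt_0_compat; lra).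
  assert (Den1 : 0 < nu*(1 + s*Lam + s*Lam/(xi1*xiL)) + Lam*xi1 + xiL).
  { assert (0 < nu*(1 + s*Lam + s*Lam/(xi1*xiL))) by (apply Rmult_lt_0_compat; lra).
    assert (0 < Lam*xi1) by (apply Rmult_lt_0_compat; lra). lra. }
  split.
  - replace ((nu * (1 + s + s * Lam / (xi1 * xiL)) + xi1 + xiL) /
             (nu * (1 + s * Lam + s * Lam / (xi1 * xiL)) + Lam * xi1 + xiL))
      with (Tn'/Td').
    + replace eps with (eps*Td'/Td') by (field; lra). rewrite E5. field. split; lra.
    + unfold Tn', Td'. field. repeat split; try lra.
      intro Hz. assert (Hz2 : Td' = 0) by (unfold Td'; rewrite <- Hz; ring). lra.
  - unfold lam.
    replace (1 + 1/s - 1) with (1/s) by ring.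
    replace (nu / (1/s)) with (s*nu) by (field; lra).
    f_equal.
    + field. split; lra.
    + field. split; lra.
Qed.
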